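(* Let $K_m$ and $L_n$ be regular languages over the same alphabet $\Sigma$ with state complexities $m$ and $n$ respectively. Then the state complexities of $K_m\setminus L_n^R$ and of $L_n^R\setminus K_m$ are each at most $m2^n-(m-1)$, and the state complexity of $K_m\oplus L_n^R$ is at most $m2^n$.
   Context: The state complexity of a regular language is the number of states of its minimal complete deterministic finite automaton. $L^R$ denotes the reversal of $L$, i.e. the set of all words of $L$ written backwards. $K\setminus L$ is set difference and $K\oplus L=(K\setminus L)\cup(L\setminus K)$ is symmetric difference. *)

(* Defs.v *)
From mathcomp Require Import all_boot.
Set Implicit Arguments. Unset Strict Implicit. Unset Printing Implicit Defensive.

Definition lang (Sigma : Type) := seq Sigma -> Prop.

Record dfa (Sigma : Type) := DFA {
  dfa_state :> finType;
  dfa_start : dfa_state;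
  dfa_trans : dfa_state -> Sigma -> dfa_state;
  dfa_final : pred dfa_state }.

Definition dfa_accept Sigma (A : dfa Sigma) (w : seq Sigma) : bool :=
  @dfa_final Sigma A (foldl (@dfa_trans Sigma A) (dfa_start A) w).

Definition recognizes Sigma (A : dfa Sigma) (L : lang Sigma) : Prop :=
  forall w, L w <-> dfa_accept A w.

Definition has_sc Sigma (L : lang Sigma) (m : nat) : Prop :=
  (exists A : dfa Sigma, recognizes A L /\ #|dfa_state A| = m) /\
  (forall A : dfa Sigma, recognizes A L -> m <= #|dfa_state A|).

Definition sc_le Sigma (L : lang Sigma) (k : nat) : Prop :=
  exists A : dfa Sigma, recognizes A L /\ #|dfa_state A| <= k.

Definition lang_rev Sigma (L : lang Sigma) : lang Sigma := fun w => L (rev w).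
Definition lang_diff Sigma (K L : lang Sigma) : lang Sigma := fun w => K w /\ ~ L w.
Definition lang_symdiff Sigma (K L : lang Sigma) : lang Sigma :=
  fun w => lang_diff K L w \/ lang_diff L K w.

(* Main.v *)
Require Import Defs.
From mathcomp Require Import all_boot.
From mathcomp Require Import zify.

Set Implicit Arguments. Unset Strict Implicit.

Lemma card_setT_pow (T : finType) : #|{: {set T}}| = 2 ^ #|T|.
Proof. by rewrite -(@cardsT {set T}) -powersetT card_powerset cardsT. Qed.

Section Collapse.
Variables (Sigma : Type) (A : dfa Sigma) (D : {set A}).
Hypothesis Dclosed : forall x a, x \in D -> @dfa_trans Sigma A x a \in D.
Hypothesis Dnonfin : forall x, x \in D -> ~~ @dfa_final Sigma A x.

Definition cst := option {x : A | x \notin D}.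
Definition cnorm (x : A) : cst := insub x.
Definition ctrans (s : cst) (a : Sigma) : cst :=
  if s is Some y then cnorm (@dfa_trans Sigma A (val y) a) else None.
Definition cfinal (s : cst) : bool :=
  if s is Some y then @dfa_final Sigma A (val y) else false.
Definition cdfa : dfa Sigma := @DFA Sigma cst (cnorm (dfa_start A)) ctrans cfinal.

Lemma crunD w x : x \in D -> foldl (@dfa_trans Sigma A) x w \in D.
Proof. by elim: w x => //= a w IH x Hx; apply: IH; apply: Dclosed. Qed.

Lemma cnormD x : x \in D -> cnorm x = None.
Proof. by move=> Hx; rewrite /cnorm insubF // Hx. Qed.

Lemma crun w x : foldl ctrans (cnorm x) w = cnorm (foldl (@dfa_trans Sigma A) x w).
Proof.
elim: w x => //= a w IH x.
case: (boolP (x \in D)) => Hx.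
  rewrite cnormD // cnormD; last by apply: crunD; apply: Dclosed.
  by elim: w {IH} => //.
by rewrite {1}/cnorm insubT /= IH.
Qed.

Lemma cfinal_norm x : cfinal (cnorm x) = @dfa_final Sigma A x.
Proof.
case: (boolP (x \in D)) => Hx.
  by rewrite cnormD //; apply/esym/negbTE/Dnonfin.
by rewrite /cnorm insubT.
Qed.

Lemma cdfa_accept w : dfa_accept cdfa w = dfa_accept A w.
Proof. by rewrite /dfa_accept /= crun cfinal_norm. Qed.

Lemma cdfa_card : #|dfa_state cdfa| = #|A| - #|D| + 1.
Proof.
rewrite /= card_option card_sig -(cardsC D) addKn addn1.
by congr _.+1; apply: eq_card => x; rewrite !inE.
Qed.
End Collapse.

Lemma collapse Sigma (A : dfa Sigma) (D : {set A}) :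
  (forall x a, x \in D -> @dfa_trans Sigma A x a \in D) ->
  (forall x, x \in D -> ~~ @dfa_final Sigma A x) ->
  exists A' : dfa Sigma, (forall w, dfa_accept A' w = dfa_accept A w) /\
     #|dfa_state A'| = #|A| - #|D| + 1.
Proof.
move=> H1 H2; exists (cdfa D); split; first exact: cdfa_accept.
exact: cdfa_card.
Qed.

Section Prod.
Variables (Sigma : Type) (A B : dfa Sigma) (f : bool -> bool -> bool).
Definition pst : finType := (dfa_state A * {set dfa_state B})%type.
Definition ptrans (s : pst) (a : Sigma) : pst :=
  (@dfa_trans Sigma A s.1 a, [set q | @dfa_trans Sigma B q a \in s.2]).
Definition pdfa : dfa Sigma :=
  @DFA Sigma pst (dfa_start A, [set q | @dfa_final Sigma B q]) ptrans
    (fun s => f (@dfa_final Sigma A s.1) (dfa_start B \in s.2)).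

Lemma prun w : foldl ptrans (dfa_start A, [set q | @dfa_final Sigma B q]) w =
  (foldl (@dfa_trans Sigma A) (dfa_start A) w,
   [set q | @dfa_final Sigma B (foldl (@dfa_trans Sigma B) q (rev w))]).
Proof.
elim/last_ind: w => // w a IH.
rewrite !foldl_rcons IH rev_rcons /ptrans /=; congr (_, _).
by apply/setP => q; rewrite !inE.
Qed.

Lemma pdfa_accept w : dfa_accept pdfa w = f (dfa_accept A w) (dfa_accept B (rev w)).
Proof. by rewrite /dfa_accept /= prun /= inE. Qed.

Lemma pdfa_card : #|dfa_state pdfa| = #|A| * 2 ^ #|B|.
Proof. by rewrite /= card_prod card_setT_pow. Qed.
End Prod.

Theorem proposition1 (Sigma : finType) (K L : lang Sigma) (m n : nat) :
  has_sc K m -> has_sc L n ->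
  sc_le (lang_diff K (lang_rev L)) (m * 2 ^ n - (m - 1)) /\
  sc_le (lang_diff (lang_rev L) K) (m * 2 ^ n - (m - 1)) /\
  sc_le (lang_symdiff K (lang_rev L)) (m * 2 ^ n).
Proof.
move=> [[A [RA cA]] _] [[B [RB cB]] _].
have m1 : 0 < m by rewrite -cA; apply/card_gt0P; exists (dfa_start A).
set N := m * 2 ^ n.
have Nm : m <= N by rewrite /N -{1}(muln1 m) leq_mul2l expn_gt0 orbT.
split; last split.
- set P := pdfa A B (fun x y => x && ~~ y).
  pose D : {set P} := setX [set: A] [set setT].
  have h1 : forall (x : P) a, x \in D -> dfa_trans x a \in D.
    rewrite /D.
    move=> [p S] a; rewrite !inE /= => /eqP ->; apply/eqP/setP => q.
    by rewrite !inE.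
  have h2 : forall (x : P), x \in D -> ~~ dfa_final x.
    rewrite /D. by move=> [p S]; rewrite !inE /= => /eqP ->; rewrite inE andbF.
  have [A' [HA' cA']] := collapse h1 h2.
  exists A'; split.
    move=> w; rewrite HA' pdfa_accept /lang_diff /lang_rev RA RB.
    by case: (dfa_accept A w); case: (dfa_accept B (rev w)); split => //= [[]].
  rewrite cA' cardsX cardsT cards1 muln1 pdfa_card cA cB -/N.
  lia.
- set P := pdfa A B (fun x y => y && ~~ x).
  pose D : {set P} := setX [set: A] [set set0].
  have h1 : forall (x : P) a, x \in D -> dfa_trans x a \in D.
    rewrite /D.
    move=> [p S] a; rewrite !inE /= => /eqP ->; apply/eqP/setP => q.
    by rewrite !inE.
  have h2 : forall (x : P), x \in D -> ~~ dfa_final x.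
    rewrite /D. by move=> [p S]; rewrite !inE /= => /eqP ->; rewrite inE.
  have [A' [HA' cA']] := collapse h1 h2.
  exists A'; split.
    move=> w; rewrite HA' pdfa_accept /lang_diff /lang_rev RA RB.
    by case: (dfa_accept A w); case: (dfa_accept B (rev w)); split => //= [[]].
  rewrite cA' cardsX cardsT cards1 muln1 pdfa_card cA cB -/N.
  lia.
- exists (pdfa A B (fun x y => x != y)); split; last by rewrite pdfa_card cA cB.
  move=> w; rewrite pdfa_accept /lang_symdiff /lang_diff /lang_rev RA RB.
  by case: (dfa_accept A w); case: (dfa_accept B (rev w)); split => //=;
    intuition.
Qed.
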